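(* Let $h\ge1$ be an integer and $r$ a real number with $r\ge 36h^3$. Let $\beta$ be a real-valued function on the positive integers such that $\beta(m)=0$ for all $m\le r$, and such that for every integer $m>r$ there exist positive integers $m_1,m_2$ with $m_1,m_2\ge m/3$, $m\le m_1+m_2\le m+h^{3/2}\sqrt m$, and $$\beta(m)\le \beta(m_1)+\beta(m_2)+h^{3/2}\sqrt m.$$ Then for every positive integer $m$, $$\beta(m)\le\begin{cases}\dfrac{10h^{3/2}m}{\sqrt{r/3}}-10h^{3/2}\sqrt m, & \text{if } m\ge r/3,\\[2mm] 0,&\text{otherwise.}\end{cases}$$ *)

(* Defs.v *)
From Stdlib Require Import Reals Lra Lia.
Open Scope R_scope.

Definition pow32 (h : nat) : R := INR h * sqrt (INR h).

(* Main.v *)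
Require Import Defs.
From Stdlib Require Import Reals Lra Lia Psatz Arith Wf_nat.
Open Scope R_scope.
Lemma key (H s x a b M1 M2 M: R): H>0 -> s>0 -> s*s >= 12*(H*H) -> x>0 -> x*x = M -> a>=0 -> b>=0 -> a*a=M1 -> b*b=M2 -> M1 >= M/3 -> M2 >= M/3 -> M <= M1+M2 -> M1+M2 <= M + H*x ->
 10*H*M1/s - 10*H*a + (10*H*M2/s - 10*H*b) + H*x <= 10*H*M/s - 10*H*x.
Proof.
intros. subst M M1 M2.
assert (Hk : H <= 0.289*s) by nra.
assert (P : (a*b)*(a*b) >= 2/9*(x*x)*(x*x)) by nra.
assert (Q : a*b >= 0.471*(x*x)).
{ destruct (Rle_lt_dec (0.471*(x*x)) (a*b)); [lra|].
  assert (0 <= a*b) by nra. assert (0 < x*x) by nra.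
  assert ((a*b)*(a*b) <= (a*b)*(0.471*(x*x))) by nra.
  assert ((a*b)*(0.471*(x*x)) <= (0.471*(x*x))*(0.471*(x*x))) by nra.
  nra. }
assert (R1 : a+b >= 1.39*x) by nra.
assert (E : 10*H*(a*a)/s - 10*H*a + (10*H*(b*b)/s - 10*H*b) + H*x - (10*H*(x*x)/s - 10*H*x)
   = 10*H*((a*a+b*b-x*x)/s) - 10*H*(a+b) + 11*H*x) by (field; lra).
assert (F : (a*a+b*b-x*x)/s <= 0.289*x).
{ apply Rmult_le_reg_r with s; [lra|]. unfold Rdiv. rewrite Rmult_assoc, Rinv_l by lra. nra. }
nra.
Qed.

Theorem mainTheorem2 (h : nat) (r : R) (beta : nat -> R)
  (hh : (1 <= h)%nat)
  (hr : r >= 36 * INR h ^ 3)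
  (hzero : forall m : nat, (1 <= m)%nat -> INR m <= r -> beta m = 0)
  (hrec : forall m : nat, (1 <= m)%nat -> INR m > r ->
     exists m1 m2 : nat, (1 <= m1)%nat /\ (1 <= m2)%nat /\
       INR m1 >= INR m / 3 /\ INR m2 >= INR m / 3 /\
       INR m <= INR m1 + INR m2 /\
       INR m1 + INR m2 <= INR m + pow32 h * sqrt (INR m) /\
       beta m <= beta m1 + beta m2 + pow32 h * sqrt (INR m)) :
  forall m : nat, (1 <= m)%nat ->
    beta m <= (if Rle_dec (r / 3) (INR m)
               then 10 * pow32 h * INR m / sqrt (r / 3) - 10 * pow32 h * sqrt (INR m)
               else 0).
Proof.
  assert (h1 : 1 <= INR h) by (apply (le_INR 1); exact hh).
  set (H := pow32 h).
  assert (HH : H * H = INR h ^ 3).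
  { unfold H, pow32. replace (INR h * sqrt (INR h) * (INR h * sqrt (INR h)))
     with (INR h * INR h * (sqrt (INR h) * sqrt (INR h))) by ring.
    rewrite sqrt_sqrt by lra. ring. }
  assert (Hpos : H > 0).
  { unfold H, pow32. assert (0 < sqrt (INR h)) by (apply sqrt_lt_R0; lra). nra. }
  assert (h3 : 1 <= INR h ^ 3) by (rewrite <- (pow1 3); apply pow_incr; lra).
  set (s := sqrt (r/3)).
  assert (ss : s * s = r/3) by (apply sqrt_sqrt; lra).
  assert (spos : s > 0) by (apply sqrt_lt_R0; lra).
  intro m. induction m as [m IH] using (well_founded_induction lt_wf). intros Hm.
  assert (xpos : sqrt (INR m) > 0) by (apply sqrt_lt_R0; apply (lt_INR 0); lia).
  assert (xx : sqrt (INR m) * sqrt (INR m) = INR m) by (apply sqrt_sqrt; apply pos_INR).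
  destruct (Rle_lt_dec (INR m) r) as [Hle | Hgt].
  - rewrite hzero by assumption.
    destruct (Rle_dec (r/3) (INR m)); [|lra].
    assert (sqrt (INR m) >= s) by nra.
    assert (E : 10 * H * INR m / s - 10 * H * sqrt (INR m)
                = 10 * H * sqrt (INR m) * (sqrt (INR m) - s) / s) .
    { set (x := sqrt (INR m)) in *. rewrite <- xx. field; lra. }
    rewrite E. apply Rmult_le_pos; [|left; apply Rinv_0_lt_compat; lra]. apply Rmult_le_pos; [apply Rmult_le_pos|]; lra.
  - destruct (hrec m Hm Hgt) as (m1 & m2 & h1m & h2m & g1 & g2 & l1 & l2 & bb).
    fold H in l2, bb.
    assert (xbig : sqrt (INR m) > 3 * H).
    { destruct (Rle_lt_dec (sqrt (INR m)) (3*H)); [|lra].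
      assert (sqrt (INR m) * sqrt (INR m) <= 3*H*(3*H)) by nra. nra. }
    assert (lt1 : (m1 < m)%nat) by (apply INR_lt; nra).
    assert (lt2 : (m2 < m)%nat) by (apply INR_lt; nra).
    pose proof (IH m1 lt1 h1m) as I1. pose proof (IH m2 lt2 h2m) as I2.
    fold H s in I1, I2 |- *.
    destruct (Rle_dec (r/3) (INR m1)); [|lra].
    destruct (Rle_dec (r/3) (INR m2)); [|lra].
    destruct (Rle_dec (r/3) (INR m)); [|lra].
    assert (K := key H s (sqrt (INR m)) (sqrt (INR m1)) (sqrt (INR m2)) (INR m1) (INR m2) (INR m)
      Hpos spos ltac:(nra) xpos xx
      ltac:(apply Rle_ge, sqrt_pos) ltac:(apply Rle_ge, sqrt_pos)
      ltac:(apply sqrt_sqrt, pos_INR) ltac:(apply sqrt_sqrt, pos_INR) g1 g2 l1 l2).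
    lra.
Qed.
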